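(* Let $V$ be a finite dimensional normed vector space. For every sequence of holonomic spaces $(V,H_i,L_i)$ there is a subsequence for which the metrics $d_{L_i}:V\times V\to\mathbb{R}$ converge uniformly on bounded subsets of $V\times V$ to a semi-metric $\rho:V\times V\to\mathbb{R}$.
   Context: $O(V)$ denotes the group of norm-preserving linear maps of $V$. A group-norm on a group $H$ is $L:H\to\mathbb{R}$ with $L(a)\ge0$, $L(a)=0$ iff $a=e$, $L(a^{-1})=L(a)$, $L(ab)\le L(a)+L(b)$. A holonomic space is a triple $(V,H,L)$ with $V$ a normed vector space, $H\le O(V)$, $L$ a group-norm on $H$, such that for every $u\in V$ there is $R>0$ with $\|v-w\|^2-\|av-w\|^2\le L(a)^2$ for all $a\in H$ and all $v,w$ with $\|u-v\|,\|u-w\|<R$. Its holonomic metric is $d_L(u,v)=\inf_{a\in H}\sqrt{L(a)^2+\|au-v\|^2}$ (a metric on $V$). A semi-metric is a symmetric nonnegative function vanishing on the diagonal and satisfying the triangle inequality. *)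

(* Defs.v *)
From Stdlib Require Import Reals Classical ClassicalEpsilon FunctionalExtensionality.
Open Scope R_scope.

(* A finite-dimensional real vector space, modelled as R^n (any finite
   dimensional real space is linearly isomorphic to some R^n; the norm is
   arbitrary). *)
Definition vec (n : nat) : Type := {i : nat | (i < n)%nat} -> R.

Definition vzero {n} : vec n := fun _ => 0.
Definition vadd {n} (u v : vec n) : vec n := fun i => u i + v i.
Definition vsub {n} (u v : vec n) : vec n := fun i => u i - v i.
Definition vscale {n} (c : R) (v : vec n) : vec n := fun i => c * v i.

Definition is_norm {n} (N : vec n -> R) : Prop :=
  (forall v, N v = 0 -> v = vzero) /\
  (forall c v, N (vscale c v) = Rabs c * N v) /\
  (forall u v, N (vadd u v) <= N u + N v).

Definition is_linear {n} (a : vec n -> vec n) : Prop :=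
  (forall u v, a (vadd u v) = vadd (a u) (a v)) /\
  (forall c v, a (vscale c v) = vscale c (a v)).

Definition in_O {n} (N : vec n -> R) (a : vec n -> vec n) : Prop :=
  is_linear a /\ forall v, N (a v) = N v.

Definition idf {n} : vec n -> vec n := fun v => v.
Definition comp {n} (a b : vec n -> vec n) : vec n -> vec n := fun v => a (b v).

Definition is_subgroup_O {n} (N : vec n -> R) (H : (vec n -> vec n) -> Prop) : Prop :=
  (forall a, H a -> in_O N a) /\
  H idf /\
  (forall a b, H a -> H b -> H (comp a b)) /\
  (forall a, H a -> exists b, H b /\ comp a b = idf /\ comp b a = idf).

Definition is_group_norm {n} (H : (vec n -> vec n) -> Prop) (L : (vec n -> vec n) -> R) : Prop :=
  (forall a, H a -> 0 <= L a) /\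
  (forall a, H a -> (L a = 0 <-> a = idf)) /\
  (forall a b, H a -> H b -> comp a b = idf -> comp b a = idf -> L b = L a) /\
  (forall a b, H a -> H b -> L (comp a b) <= L a + L b).

Definition holonomic {n} (N : vec n -> R) (H : (vec n -> vec n) -> Prop)
  (L : (vec n -> vec n) -> R) : Prop :=
  is_norm N /\ is_subgroup_O N H /\ is_group_norm H L /\
  forall u : vec n, exists Rad, 0 < Rad /\
    forall a v w, H a -> N (vsub u v) < Rad -> N (vsub u w) < Rad ->
      N (vsub v w) ^ 2 - N (vsub (a v) w) ^ 2 <= L a ^ 2.

Definition is_glb (S : R -> Prop) (x : R) : Prop :=
  (forall y, S y -> x <= y) /\ (forall z, (forall y, S y -> z <= y) -> z <= x).

Definition hol_metric {n} (N : vec n -> R) (H : (vec n -> vec n) -> Prop)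
  (L : (vec n -> vec n) -> R) (u v : vec n) : R :=
  epsilon (inhabits 0)
    (is_glb (fun y => exists a, H a /\ y = sqrt (L a ^ 2 + N (vsub (a u) v) ^ 2))).

Definition semi_metric {n} (rho : vec n -> vec n -> R) : Prop :=
  (forall u v, 0 <= rho u v) /\
  (forall u v, rho u v = rho v u) /\
  (forall u, rho u u = 0) /\
  (forall u v w, rho u w <= rho u v + rho v w).

(* Main.v *)
Require Import Defs.
From Stdlib Require Import Reals Lra Lia Psatz Classical ClassicalEpsilon FunctionalExtensionality Arith Cantor Rtopology RiemannInt SeqProp.
Open Scope R_scope.

Definition sincr (phi : nat -> nat) : Prop := forall k, (phi k < phi (S k))%nat.

Lemma sincr_lt phi : sincr phi -> forall a b, (a < b)%nat -> (phi a < phi b)%nat.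
Proof.
  intros Hp a b Hab. induction Hab.
  - apply Hp.
  - specialize (Hp m). lia.
Qed.

Lemma sincr_le phi : sincr phi -> forall a b, (a <= b)%nat -> (phi a <= phi b)%nat.
Proof.
  intros Hp a b Hab. destruct (Nat.eq_dec a b). subst; lia.
  assert (a < b)%nat by lia. pose proof (sincr_lt phi Hp a b H). lia.
Qed.

Lemma sincr_ge phi : sincr phi -> forall k, (k <= phi k)%nat.
Proof.
  intros Hp k. induction k. lia. specialize (Hp k). lia.
Qed.

Lemma sincr_comp f g : sincr f -> sincr g -> sincr (fun k => f (g k)).
Proof. intros Hf Hg k. apply sincr_lt; auto. Qed.

Lemma cv_sub u l phi : Un_cv u l -> sincr phi -> Un_cv (fun k => u (phi k)) l.
Proof.
  intros Hu Hp eps He. destruct (Hu eps He) as [K HK]. exists K.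
  intros k Hk. apply HK. pose proof (sincr_ge phi Hp k). lia.
Qed.

Lemma inv_small eps : 0 < eps -> exists K, forall k, (K <= k)%nat -> / (INR k + 1) < eps.
Proof.
  intros He. destruct (archimed (/ eps)) as [H1 _].
  assert (0 <= IZR (up (/ eps))).
  { assert (0 < / eps) by (apply Rinv_0_lt_compat; lra). lra. }
  destruct (IZN (up (/eps))) as [m Hm]. apply le_IZR; auto.
  exists m. intros k Hk. rewrite Hm, <- INR_IZR_INZ in H1.
  apply le_INR in Hk.
  assert (0 < / eps) by (apply Rinv_0_lt_compat; lra).
  rewrite <- (Rinv_inv eps).
  apply Rinv_lt_contravar. nra. lra.
Qed.

Lemma cluster_sub (u : nat -> R) l :
  (forall eps, 0 < eps -> forall K, exists p, (K <= p)%nat /\ Rabs (u p - l) < eps) ->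
  exists phi, sincr phi /\ Un_cv (fun k => u (phi k)) l.
Proof.
  intros Hc.
  set (nx := fun (m k : nat) => epsilon (inhabits 0%nat)
        (fun p => (m <= p)%nat /\ Rabs (u p - l) < / (INR k + 1))).
  assert (Hnx : forall m k, (m <= nx m k)%nat /\ Rabs (u (nx m k) - l) < / (INR k + 1)).
  { intros m k. unfold nx. apply epsilon_spec. apply Hc.
    apply Rinv_0_lt_compat. pose proof (pos_INR k). lra. }
  set (phi := fix f k := match k with O => nx O O | S k' => nx (S (f k')) (S k') end).
  exists phi. split.
  - intros k. simpl. destruct (Hnx (S (phi k)) (S k)). lia.
  - intros eps He. destruct (inv_small eps He) as [K HK]. exists K. intros k Hk.
    unfold Rdist. apply Rlt_trans with (/ (INR k + 1)); auto.
    destruct k; simpl; apply Hnx.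
Qed.

Lemma BW1 (u : nat -> R) M : (forall i, Rabs (u i) <= M) ->
  exists phi l, sincr phi /\ Un_cv (fun k => u (phi k)) l.
Proof.
  intros Hb.
  destruct (Bolzano_Weierstrass u (fun c => -M <= c <= M) (compact_P3 (-M) M)) as [l Hl].
  { intros i. specialize (Hb i). unfold Rabs in Hb; destruct (Rcase_abs (u i)); lra. }
  destruct (cluster_sub u l) as [phi [H1 H2]].
  2: { exists phi, l; auto. } intros eps He K.
  destruct (Hl (disc l (mkposreal eps He)) K) as [p [Hp1 Hp2]].
  { exists (mkposreal eps He). intros y Hy; exact Hy. }
  exists p. split; auto.
Qed.
Definition sel (u : nat -> R) : nat -> nat :=
  epsilon (inhabits (fun k : nat => k))
    (fun psi => sincr psi /\ exists l, Un_cv (fun k => u (psi k)) l).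

Lemma sel_spec u M : (forall i, Rabs (u i) <= M) ->
  sincr (sel u) /\ exists l, Un_cv (fun k => u (sel u k)) l.
Proof.
  intros Hb. unfold sel. apply epsilon_spec.
  destruct (BW1 u M Hb) as [phi [l [H1 H2]]]. exists phi. split; eauto.
Qed.

Lemma diag (x : nat -> nat -> R) (M : nat -> R) :
  (forall j i, Rabs (x j i) <= M j) ->
  exists phi, sincr phi /\ forall j, exists l, Un_cv (fun k => x j (phi k)) l.
Proof.
  intros Hb.
  set (Psi := fix P j := match j with
                | O => sel (x O)
                | S j' => fun k => P j' (sel (fun t => x (S j') (P j' t)) k) end).
  assert (HP : forall j, sincr (Psi j) /\ exists l, Un_cv (fun k => x j (Psi j k)) l).
  { induction j.
    - simpl. apply (sel_spec _ (M O)). auto.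
    - destruct IHj as [IH1 IH2].
      destruct (sel_spec (fun t => x (S j) (Psi j t)) (M (S j))) as [S1 S2]; auto.
      split.
      + simpl. apply sincr_comp; auto.
      + simpl. exact S2. }
  assert (Hrel : forall k j, (j <= k)%nat -> forall m, exists t, Psi k m = Psi j t /\ (m <= t)%nat).
  { induction k; intros j Hj m.
    - assert (j = O) by lia. subst. exists m. split; auto.
    - destruct (Nat.eq_dec j (S k)). subst. exists m; split; auto.
      destruct (IHk j ltac:(lia) (sel (fun t => x (S k) (Psi k t)) m)) as [t [Ht1 Ht2]].
      exists t. split. simpl. exact Ht1.
      destruct (sel_spec (fun t => x (S k) (Psi k t)) (M (S k))) as [S1 S2]; auto.
      pose proof (sincr_ge _ S1 m). lia. }
  exists (fun k => Psi k k). split.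
  - intros k. simpl.
    destruct (sel_spec (fun t => x (S k) (Psi k t)) (M (S k))) as [S1 S2]; auto.
    pose proof (sincr_ge _ S1 (S k)).
    apply sincr_lt. apply HP. lia.
  - intros j. destruct (HP j) as [H1 [l Hl]]. exists l.
    intros eps He. destruct (Hl eps He) as [K HK]. exists (max K j).
    intros k Hk. destruct (Hrel k j ltac:(lia) k) as [t [Ht1 Ht2]].
    rewrite Ht1. apply HK. lia.
Qed.
Lemma vec_ext {n} (u v : vec n) : (forall i, u i = v i) -> u = v.
Proof. intros; apply functional_extensionality; auto. Qed.

Lemma N0 {n} (N : vec n -> R) : is_norm N -> N vzero = 0.
Proof.
  intros [H1 [H2 H3]]. assert (vzero = vscale 0 (@vzero n)).
  { apply vec_ext; intros; unfold vscale, vzero; ring. }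
  rewrite H, H2, Rabs_R0. ring.
Qed.

Lemma Nscale {n} (N : vec n -> R) c v : is_norm N -> N (vscale c v) = Rabs c * N v.
Proof. intros [H1 [H2 H3]]; auto. Qed.

Lemma Nadd {n} (N : vec n -> R) u v : is_norm N -> N (vadd u v) <= N u + N v.
Proof. intros [H1 [H2 H3]]; auto. Qed.

Lemma Nge0 {n} (N : vec n -> R) v : is_norm N -> 0 <= N v.
Proof.
  intros HN. pose proof (Nadd N v (vscale (-1) v) HN).
  assert (vadd v (vscale (-1) v) = vzero).
  { apply vec_ext; intros; unfold vadd, vscale, vzero; ring. }
  rewrite H0, N0, Nscale in H; auto. replace (Rabs (-1)) with 1 in H. lra.
  rewrite Rabs_left; lra.
Qed.

Lemma Nsub_sym {n} (N : vec n -> R) u v : is_norm N -> N (vsub u v) = N (vsub v u).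
Proof.
  intros HN. assert (vsub u v = vscale (-1) (vsub v u)).
  { apply vec_ext; intros; unfold vsub, vscale; ring. }
  rewrite H, Nscale; auto. rewrite Rabs_left; lra.
Qed.

Lemma Ntri {n} (N : vec n -> R) u v w : is_norm N ->
  N (vsub u w) <= N (vsub u v) + N (vsub v w).
Proof.
  intros HN. assert (vsub u w = vadd (vsub u v) (vsub v w)).
  { apply vec_ext; intros; unfold vsub, vadd; ring. }
  rewrite H; apply Nadd; auto.
Qed.

Lemma Nself {n} (N : vec n -> R) u : is_norm N -> N (vsub u u) = 0.
Proof.
  intros HN. assert (vsub u u = vzero) by (apply vec_ext; intros; unfold vsub, vzero; ring).
  rewrite H; apply N0; auto.
Qed.

Lemma lin_sub {n} (a : vec n -> vec n) x y : is_linear a -> a (vsub x y) = vsub (a x) (a y).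
Proof.
  intros [H1 H2]. assert (vsub x y = vadd x (vscale (-1) y)).
  { apply vec_ext; intros; unfold vsub, vadd, vscale; ring. }
  rewrite H, H1, H2. apply vec_ext; intros; unfold vsub, vadd, vscale; ring.
Qed.

Lemma O_sub {n} (N : vec n -> R) a x y : in_O N a -> N (vsub (a x) (a y)) = N (vsub x y).
Proof. intros [Hl Hn]. rewrite <- lin_sub; auto. Qed.

Lemma glb_exists (S : R -> Prop) : (exists y, S y) -> (forall y, S y -> 0 <= y) ->
  exists x, is_glb S x.
Proof.
  intros [y0 Hy0] Hpos.
  destruct (completeness (fun z => S (- z))) as [m [Hm1 Hm2]].
  { exists 0. intros z Hz. apply Hpos in Hz. lra. }
  { exists (- y0). rewrite Ropp_involutive. auto. }
  exists (- m). split.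
  - intros y Hy. assert (- y <= m). apply Hm1. rewrite Ropp_involutive; auto. lra.
  - intros z Hz. assert (m <= - z). apply Hm2. intros w Hw. apply Hz in Hw. lra. lra.
Qed.

Lemma glb_unique S x y : is_glb S x -> is_glb S y -> x = y.
Proof. intros [A1 A2] [B1 B2]. apply Rle_antisym; auto. Qed.

Definition hset {n} (N : vec n -> R) (H : (vec n -> vec n) -> Prop) (L : (vec n -> vec n) -> R) u v :=
  fun y => exists a, H a /\ y = sqrt (L a ^ 2 + N (vsub (a u) v) ^ 2).

Lemma hol_glb {n} (N : vec n -> R) H L u v : holonomic N H L ->
  is_glb (hset N H L u v) (hol_metric N H L u v).
Proof.
  intros [HN [[HO [Hid _]] _]]. unfold hol_metric. apply epsilon_spec.
  apply glb_exists.
  - exists (sqrt (L idf ^ 2 + N (vsub (idf u) v) ^ 2)). exists idf; auto.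
  - intros y [a [_ Ha]]. subst. apply sqrt_pos.
Qed.

Lemma hol_le {n} (N : vec n -> R) H L u v a : holonomic N H L -> H a ->
  hol_metric N H L u v <= sqrt (L a ^ 2 + N (vsub (a u) v) ^ 2).
Proof.
  intros Hh Ha. destruct (hol_glb N H L u v Hh) as [G1 _]. apply G1. exists a; auto.
Qed.

Lemma hol_approx {n} (N : vec n -> R) H L u v eps : holonomic N H L -> 0 < eps ->
  exists a, H a /\ sqrt (L a ^ 2 + N (vsub (a u) v) ^ 2) < hol_metric N H L u v + eps.
Proof.
  intros Hh He. destruct (hol_glb N H L u v Hh) as [_ G2].
  apply NNPP. intros Hc.
  assert (hol_metric N H L u v + eps <= hol_metric N H L u v); [|lra].
  apply G2. intros y [a [Ha Hy]]. subst. apply Rnot_lt_le. intro. apply Hc. eauto.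
Qed.

Lemma hol_ge0 {n} (N : vec n -> R) H L u v : holonomic N H L -> 0 <= hol_metric N H L u v.
Proof.
  intros Hh. destruct (hol_glb N H L u v Hh) as [_ G2]. apply G2.
  intros y [a [_ Ha]]. subst. apply sqrt_pos.
Qed.

Lemma hol_leN {n} (N : vec n -> R) H L u v : holonomic N H L ->
  hol_metric N H L u v <= N (vsub u v).
Proof.
  intros Hh. pose proof Hh as [HN [[HO [Hid _]] [[_ [HL0 _]] _]]].
  eapply Rle_trans. apply (hol_le _ _ _ u v idf Hh Hid).
  assert (L idf = 0) by (apply HL0; auto). rewrite H0.
  unfold idf. replace (0 ^ 2 + N (vsub u v) ^ 2) with (N (vsub u v) ^ 2) by ring.
  rewrite sqrt_pow2. lra. apply Nge0; auto.
Qed.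
Lemma le_eps x y : (forall eps, 0 < eps -> x <= y + eps) -> x <= y.
Proof.
  intros H. apply Rnot_lt_le. intro Hc. specialize (H ((x - y)/2) ltac:(lra)). lra.
Qed.

Lemma mink A B x1 y1 x2 y2 : 0 <= A -> A <= x1 + x2 -> 0 <= B -> B <= y1 + y2 ->
  0 <= x1 -> 0 <= y1 -> 0 <= x2 -> 0 <= y2 ->
  sqrt (A ^ 2 + B ^ 2) <= sqrt (x1 ^ 2 + y1 ^ 2) + sqrt (x2 ^ 2 + y2 ^ 2).
Proof.
  intros. set (s1 := sqrt (x1 ^ 2 + y1 ^ 2)). set (s2 := sqrt (x2 ^ 2 + y2 ^ 2)).
  assert (E1 : s1 * s1 = x1 ^ 2 + y1 ^ 2) by (apply sqrt_sqrt; nra).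
  assert (E2 : s2 * s2 = x2 ^ 2 + y2 ^ 2) by (apply sqrt_sqrt; nra).
  assert (P1 : 0 <= s1) by apply sqrt_pos. assert (P2 : 0 <= s2) by apply sqrt_pos.
  assert (Hc : x1 * x2 + y1 * y2 <= s1 * s2).
  { assert ((x1 * x2 + y1 * y2) ^ 2 <= (s1 * s2) ^ 2).
    { replace ((s1 * s2) ^ 2) with ((s1 * s1) * (s2 * s2)) by ring.
      rewrite E1, E2. pose proof (pow2_ge_0 (x1*y2 - x2*y1)). nra. }
    assert (0 <= s1 * s2) by nra. nra. }
  rewrite <- (sqrt_pow2 (s1 + s2)) by lra.
  apply sqrt_le_1_alt. nra.
Qed.

Lemma hol_self {n} (N : vec n -> R) H L u : holonomic N H L -> hol_metric N H L u u = 0.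
Proof.
  intros Hh. pose proof (hol_leN N H L u u Hh). pose proof (hol_ge0 N H L u u Hh).
  rewrite Nself in H0. lra. apply Hh.
Qed.

Lemma hol_sym_le {n} (N : vec n -> R) H L u v : holonomic N H L ->
  hol_metric N H L v u <= hol_metric N H L u v.
Proof.
  intros Hh. pose proof Hh as [HN [[HO [Hid [Hcomp Hinv]]] [[_ [_ [HLinv _]]] _]]].
  apply le_eps. intros eps He.
  destruct (hol_approx N H L u v eps Hh He) as [a [Ha Hlt]].
  destruct (Hinv a Ha) as [b [Hb [Hab Hba]]].
  eapply Rle_trans. apply (hol_le _ _ _ v u b Hh Hb).
  rewrite (HLinv a b Ha Hb Hab Hba).
  assert (E : N (vsub (b v) u) = N (vsub (a u) v)).
  { assert (u = b (a u)) by (change (b (a u)) with (Defs.comp b a u); rewrite Hba; reflexivity).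
    rewrite H0 at 1. rewrite O_sub by auto. apply Nsub_sym; auto. }
  rewrite E. lra.
Qed.

Lemma hol_sym {n} (N : vec n -> R) H L u v : holonomic N H L ->
  hol_metric N H L u v = hol_metric N H L v u.
Proof. intros Hh. apply Rle_antisym; apply hol_sym_le; auto. Qed.

Lemma hol_tri {n} (N : vec n -> R) H L u v w : holonomic N H L ->
  hol_metric N H L u w <= hol_metric N H L u v + hol_metric N H L v w.
Proof.
  intros Hh. pose proof Hh as [HN [[HO [Hid [Hcomp Hinv]]] [[HL0 [_ [_ HLtri]]] _]]].
  apply le_eps. intros eps He.
  destruct (hol_approx N H L u v (eps/2) Hh ltac:(lra)) as [b [Hb Hltb]].
  destruct (hol_approx N H L v w (eps/2) Hh ltac:(lra)) as [a [Ha Hlta]].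
  eapply Rle_trans. apply (hol_le _ _ _ u w (Defs.comp a b) Hh (Hcomp a b Ha Hb)).
  eapply Rle_trans.
  apply (mink _ _ (L b) (N (vsub (b u) v)) (L a) (N (vsub (a v) w))).
  - apply HL0; auto.
  - pose proof (HLtri a b Ha Hb). lra.
  - apply Nge0; auto.
  - unfold Defs.comp. eapply Rle_trans. apply (Ntri N _ (a v)); auto.
    rewrite O_sub by auto. lra.
  - apply HL0; auto.
  - apply Nge0; auto.
  - apply HL0; auto.
  - apply Nge0; auto.
  - lra.
Qed.

Lemma lip_gen {n} (N : vec n -> R) (f : vec n -> vec n -> R) : is_norm N ->
  (forall u v, f u v = f v u) -> (forall u v w, f u w <= f u v + f v w) ->
  (forall u v, f u v <= N (vsub u v)) ->
  forall u v u' v', Rabs (f u v - f u' v') <= N (vsub u u') + N (vsub v v').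
Proof.
  intros HN Hs Ht Hl u v u' v'.
  pose proof (Ht u u' v). pose proof (Ht u' v' v). pose proof (Ht u' u v').
  pose proof (Ht u v v'). pose proof (Hl u u'). pose proof (Hl u' u). pose proof (Hl v v'). pose proof (Hl v' v).
  rewrite (Nsub_sym N u' u) in *; auto. rewrite (Nsub_sym N v' v) in *; auto.
  pose proof (Hs u' u). pose proof (Hs v' v).
  apply Rabs_le. lra.
Qed.
Lemma sig_eq {n} (i : {i : nat | (i < n)%nat}) m (H : (m < n)%nat) :
  proj1_sig i = m -> i = exist _ m H.
Proof.
  destruct i as [k Hk]. simpl. intros ->. f_equal. apply Peano_dec.le_unique.
Qed.

Definition ebas {n} (m : nat) : vec n := fun i => if Nat.eq_dec (proj1_sig i) m then 1 else 0.
Definition trunc {n} (m : nat) (x : vec n) : vec n :=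
  fun i => if lt_dec (proj1_sig i) m then x i else 0.
Fixpoint Csum {n} (N : vec n -> R) (m : nat) : R :=
  match m with O => 0 | S m' => Csum N m' + N (ebas m') end.

Lemma Csum_ge0 {n} (N : vec n -> R) m : is_norm N -> 0 <= Csum N m.
Proof. intros HN. induction m; simpl. lra. pose proof (Nge0 N (ebas m) HN). lra. Qed.

Lemma Nup_trunc {n} (N : vec n -> R) x d : is_norm N -> 0 <= d ->
  (forall i, Rabs (x i) <= d) -> forall m, N (trunc m x) <= d * Csum N m.
Proof.
  intros HN Hd Hx. induction m.
  - simpl. assert (trunc 0 x = vzero).
    { apply vec_ext. intros i. unfold trunc, vzero. destruct (lt_dec _ 0); [lia|auto]. }
    rewrite H, N0; auto. lra.
  - simpl. pose proof (Nge0 N (@ebas n m) HN).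
    destruct (lt_dec m n) as [Hm|Hm].
    + assert (trunc (S m) x = vadd (trunc m x) (vscale (x (exist _ m Hm)) (ebas m))).
      { apply vec_ext. intros i. unfold trunc, vadd, vscale, ebas.
        destruct (lt_dec (proj1_sig i) (S m)); destruct (lt_dec (proj1_sig i) m);
          destruct (Nat.eq_dec (proj1_sig i) m); try lia; try ring.
        rewrite (sig_eq i m Hm e). ring. }
      rewrite H0. eapply Rle_trans. apply Nadd; auto. rewrite Nscale; auto.
      pose proof (Hx (exist _ m Hm)). nra.
    + assert (trunc (S m) x = trunc m x).
      { apply vec_ext. intros i. unfold trunc. destruct i as [k Hk]; simpl.
        destruct (lt_dec k (S m)); destruct (lt_dec k m); try lia; auto. }
      rewrite H0. nra.
Qed.

Lemma Nup {n} (N : vec n -> R) : is_norm N ->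
  exists C, 0 <= C /\ forall x d, 0 <= d -> (forall i, Rabs (x i) <= d) -> N x <= d * C.
Proof.
  intros HN. exists (Csum N n). split. apply Csum_ge0; auto.
  intros x d Hd Hx. assert (trunc n x = x).
  { apply vec_ext. intros [k Hk]. unfold trunc; simpl. destruct (lt_dec k n); auto; lia. }
  rewrite <- H. apply Nup_trunc; auto.
Qed.

Lemma ev_all {n} (P : {i : nat | (i < n)%nat} -> nat -> Prop) :
  (forall i, exists K, forall k, (K <= k)%nat -> P i k) ->
  exists K, forall k, (K <= k)%nat -> forall i, P i k.
Proof.
  intros HP.
  assert (forall m, exists K, forall k, (K <= k)%nat -> forall i, (proj1_sig i < m)%nat -> P i k).
  { induction m.
    - exists O. intros. lia.
    - destruct IHm as [K1 HK1]. destruct (lt_dec m n) as [Hm|Hm].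
      + destruct (HP (exist _ m Hm)) as [K2 HK2]. exists (max K1 K2).
        intros k Hk i Hi. destruct (Nat.eq_dec (proj1_sig i) m).
        * rewrite (sig_eq i m Hm e). apply HK2. lia.
        * apply HK1. lia. lia.
      + exists K1. intros k Hk i Hi. apply HK1; auto. destruct i; simpl in *; lia. }
  destruct (H n) as [K HK]. exists K. intros k Hk i. apply HK; auto. destruct i; simpl; lia.
Qed.

Lemma BWn {n} (s : nat -> vec n) M : (forall k i, Rabs (s k i) <= M) ->
  exists phi w, sincr phi /\ forall i, Un_cv (fun k => s (phi k) i) (w i).
Proof.
  intros Hb.
  assert (forall m, exists phi, sincr phi /\ forall i, (proj1_sig i < m)%nat ->
            exists l, Un_cv (fun k => s (phi k) i) l).
  { induction m.
    - exists (fun k => k). split. intros k; lia. intros; lia.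
    - destruct IHm as [phi [Hp Hc]]. destruct (lt_dec m n) as [Hm|Hm].
      + destruct (BW1 (fun k => s (phi k) (exist _ m Hm)) M) as [psi [l [Hpsi Hl]]]; auto.
        exists (fun k => phi (psi k)). split. apply sincr_comp; auto.
        intros i Hi. destruct (Nat.eq_dec (proj1_sig i) m).
        * rewrite (sig_eq i m Hm e). exists l; auto.
        * destruct (Hc i ltac:(lia)) as [l' Hl']. exists l'.
          apply (cv_sub (fun k => s (phi k) i)); auto.
      + exists phi. split; auto. intros i Hi. apply Hc. destruct i; simpl in *; lia. }
  destruct (H n) as [phi [Hp Hc]]. exists phi.
  exists (fun i => epsilon (inhabits 0) (fun l => Un_cv (fun k => s (phi k) i) l)).
  split; auto. intros i. apply epsilon_spec. apply Hc. destruct i; simpl; lia.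
Qed.

Lemma Nconv {n} (N : vec n -> R) (s : nat -> vec n) w : is_norm N ->
  (forall i, Un_cv (fun k => s k i) (w i)) ->
  forall eps, 0 < eps -> exists K, forall k, (K <= k)%nat -> N (vsub (s k) w) < eps.
Proof.
  intros HN Hc eps He. destruct (Nup N HN) as [C [HC HCb]].
  set (d := eps / (C + 1)).
  assert (Hd : 0 < d) by (unfold d; apply Rdiv_lt_0_compat; lra).
  destruct (ev_all (fun i k => Rabs (s k i - w i) < d)) as [K HK].
  { intros i. destruct (Hc i d Hd) as [K HK]. exists K. intros k Hk. apply HK; auto. }
  exists K. intros k Hk. eapply Rle_lt_trans. apply (HCb _ d). lra.
  intros i. unfold vsub. left. apply HK; auto.
  unfold d. replace (eps / (C + 1) * C) with (eps * (C / (C + 1))) by (field; lra).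
  assert (C / (C + 1) < 1). { apply Rmult_lt_reg_r with (C + 1). lra.
    unfold Rdiv. rewrite Rmult_assoc, Rinv_l by lra. lra. }
  nra.
Qed.
Lemma argmax {n} (x : vec n) (i0 : {i : nat | (i < n)%nat}) :
  exists j, forall i, Rabs (x i) <= Rabs (x j).
Proof.
  assert (forall m, exists j, forall i, (proj1_sig i < m)%nat -> Rabs (x i) <= Rabs (x j)).
  { induction m.
    - exists i0. intros; lia.
    - destruct IHm as [j Hj]. destruct (lt_dec m n) as [Hm|Hm].
      + destruct (Rle_dec (Rabs (x j)) (Rabs (x (exist _ m Hm)))).
        * exists (exist _ m Hm). intros i Hi. destruct (Nat.eq_dec (proj1_sig i) m).
          rewrite (sig_eq i m Hm e). lra. pose proof (Hj i ltac:(lia)). lra.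
        * exists j. intros i Hi. destruct (Nat.eq_dec (proj1_sig i) m).
          rewrite (sig_eq i m Hm e). lra. apply Hj; lia.
      + exists j. intros i Hi. apply Hj. destruct i; simpl in *; lia. }
  destruct (H n) as [j Hj]. exists j. intros i. apply Hj. destruct i; simpl; lia.
Qed.

Lemma Nlow {n} (N : vec n -> R) : is_norm N ->
  exists C2, forall x i, Rabs (x i) <= C2 * N x.
Proof.
  intros HN. apply NNPP. intros Hc.
  assert (Hk : forall k : nat, exists p : vec n * {i : nat | (i < n)%nat},
     (INR k + 1) * N (fst p) < Rabs (fst p (snd p))).
  { intros k. apply NNPP. intros Hk. apply Hc. exists (INR k + 1). intros x i.
    apply Rnot_lt_le. intro. apply Hk. exists (x, i). simpl. auto. }
  destruct (choice _ Hk) as [f Hf].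
  set (jm := fun k => epsilon (inhabits (snd (f k)))
                 (fun j => forall i, Rabs (fst (f k) i) <= Rabs (fst (f k) j))).
  assert (Hjm : forall k i, Rabs (fst (f k) i) <= Rabs (fst (f k) (jm k))).
  { intros k. unfold jm. apply epsilon_spec. apply argmax. exact (snd (f k)). }
  assert (Hpos : forall k, 0 < Rabs (fst (f k) (jm k))).
  { intros k. pose proof (Hf k). pose proof (Hjm k (snd (f k))).
    pose proof (Nge0 N (fst (f k)) HN). pose proof (pos_INR k). nra. }
  set (w := fun k => vscale (/ Rabs (fst (f k) (jm k))) (fst (f k))).
  assert (Hw1 : forall k i, Rabs (w k i) <= 1).
  { intros k i. unfold w, vscale. rewrite Rabs_mult, Rabs_inv, Rabs_Rabsolu.
    pose proof (Hjm k i). pose proof (Hpos k).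
    apply Rmult_le_reg_l with (Rabs (fst (f k) (jm k))); auto.
    rewrite <- Rmult_assoc, Rinv_r by lra. lra. }
  assert (Hw2 : forall k, Rabs (w k (jm k)) = 1).
  { intros k. unfold w, vscale. rewrite Rabs_mult, Rabs_inv, Rabs_Rabsolu.
    apply Rinv_l. pose proof (Hpos k). lra. }
  assert (Hw3 : forall k, N (w k) < / (INR k + 1)).
  { intros k. unfold w. rewrite Nscale; auto. rewrite Rabs_inv, Rabs_Rabsolu.
    pose proof (Hf k). pose proof (Hjm k (snd (f k))). pose proof (Hpos k). pose proof (pos_INR k).
    apply Rmult_lt_reg_l with (Rabs (fst (f k) (jm k))); auto.
    rewrite <- Rmult_assoc, Rinv_r by lra.
    apply Rmult_lt_reg_l with (INR k + 1). lra.
    replace ((INR k + 1) * (Rabs (fst (f k) (jm k)) * / (INR k + 1)))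
      with (Rabs (fst (f k) (jm k))) by (field; lra). lra. }
  destruct (BWn w 1 Hw1) as [psi [ws [Hpsi Hws]]].
  assert (Hz : N ws = 0).
  { apply Rle_antisym; [|apply Nge0; auto]. apply le_eps. intros eps He.
    destruct (Nconv N (fun k => w (psi k)) ws HN Hws (eps/2) ltac:(lra)) as [K1 HK1].
    destruct (inv_small (eps/2) ltac:(lra)) as [K2 HK2].
    set (k := max K1 K2).
    pose proof (HK1 k ltac:(lia)). pose proof (HK2 (psi k)).
    pose proof (sincr_ge psi Hpsi k).
    pose proof (Hw3 (psi k)).
    pose proof (Ntri N ws (w (psi k)) vzero HN).
    assert (vsub ws vzero = ws) by (apply vec_ext; intros; unfold vsub, vzero; ring).
    assert (vsub (w (psi k)) vzero = w (psi k)) by (apply vec_ext; intros; unfold vsub, vzero; ring).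
    rewrite H4, H5, Nsub_sym in H3 by auto.
    assert (/ (INR (psi k) + 1) < eps/2) by (apply H0; lia). lra. }
  destruct HN as [HN1 _]. pose proof (HN1 ws Hz) as Hws0.
  destruct (ev_all (fun i k => Rabs (w (psi k) i - ws i) < / 2)) as [K HK].
  { intros i. destruct (Hws i (/2) ltac:(lra)) as [K HK]. exists K. intros; apply HK; auto. }
  specialize (HK K (le_n K) (jm (psi K))). rewrite Hws0 in HK. unfold vzero in HK.
  rewrite Rminus_0_r, Hw2 in HK. lra.
Qed.

Definition zn (k : nat) : Z := (Z.of_nat (fst (of_nat k)) - Z.of_nat (snd (of_nat k)))%Z.
Definition qe (k : nat) : R := IZR (zn (fst (of_nat k))) / INR (S (snd (of_nat k))).

Lemma qe_dense x d : 0 < d -> exists k, Rabs (qe k - x) < d.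
Proof.
  intros Hd. destruct (inv_small d Hd) as [m Hm]. specialize (Hm m (le_n m)).
  set (z := up (x * (INR m + 1))).
  destruct (archimed (x * (INR m + 1))) as [A1 A2].
  exists (to_nat (to_nat (Z.to_nat z, Z.to_nat (- z)), m)).
  unfold qe, zn. rewrite !cancel_of_to. cbn [fst snd]. rewrite !cancel_of_to. cbn [fst snd].
  replace (Z.of_nat (Z.to_nat z) - Z.of_nat (Z.to_nat (- z)))%Z with z by lia.
  rewrite S_INR. pose proof (pos_INR m).
  assert (E : IZR z / (INR m + 1) - x = (IZR z - x * (INR m + 1)) / (INR m + 1)) by (field; lra).
  rewrite E. fold z in A1, A2. rewrite Rabs_right.
  - apply Rle_lt_trans with (1 / (INR m + 1)).
    unfold Rdiv. apply Rmult_le_compat_r. left; apply Rinv_0_lt_compat; lra. lra.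
    lra.
  - apply Rle_ge. unfold Rdiv. apply Rmult_le_pos. lra. left; apply Rinv_0_lt_compat; lra.
Qed.

Fixpoint cd (k j : nat) : nat :=
  match k with O => fst (of_nat j) | S k' => cd k' (snd (of_nat j)) end.

Lemma cd_surj m : forall t : nat -> nat, exists j, forall k, (k < m)%nat -> cd k j = t k.
Proof.
  induction m; intros t.
  - exists O; intros; lia.
  - destruct (IHm (fun k => t (S k))) as [j' Hj']. exists (to_nat (t O, j')).
    intros k Hk. destruct k; cbn [cd]; rewrite cancel_of_to; cbn [fst snd]; auto. apply Hj'; lia.
Qed.

Definition ed {n} (j : nat) : vec n := fun i => qe (cd (proj1_sig i) j).

Lemma ed_dense {n} (v : vec n) d : 0 < d -> exists j, forall i, Rabs (ed j i - v i) < d.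
Proof.
  intros Hd.
  set (vk := fun k => match lt_dec k n with left H => v (exist _ k H) | right _ => 0 end).
  assert (forall k, exists t, Rabs (qe t - vk k) < d) by (intros; apply qe_dense; auto).
  destruct (choice _ H) as [t Ht]. destruct (cd_surj n t) as [j Hj]. exists j.
  intros [k Hk]. unfold ed; simpl. rewrite Hj by auto. specialize (Ht k). unfold vk in Ht.
  destruct (lt_dec k n); [|lia]. rewrite (sig_eq (exist _ k l) k Hk) in Ht; auto.
Qed.

Lemma ed_denseN {n} (N : vec n -> R) (v : vec n) eps : is_norm N -> 0 < eps ->
  exists j, N (vsub (ed j) v) < eps.
Proof.
  intros HN He. destruct (Nup N HN) as [C [HC HCb]].
  set (d := eps / (C + 1)).
  assert (Hd : 0 < d) by (unfold d; apply Rdiv_lt_0_compat; lra).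
  destruct (ed_dense v d Hd) as [j Hj]. exists j.
  eapply Rle_lt_trans. apply (HCb _ d). lra. intros i; unfold vsub; left; auto.
  unfold d. replace (eps / (C + 1) * C) with (eps * (C / (C + 1))) by (field; lra).
  assert (C / (C + 1) < 1). { apply Rmult_lt_reg_r with (C + 1). lra.
    unfold Rdiv. rewrite Rmult_assoc, Rinv_l by lra. lra. }
  nra.
Qed.
Lemma absle a b : Rabs a <= b -> - b <= a <= b.
Proof. unfold Rabs; destruct (Rcase_abs a); intros; lra. Qed.

Lemma cv_const c : Un_cv (fun _ : nat => c) c.
Proof. intros eps He. exists O. intros. unfold Rdist. rewrite Rminus_diag, Rabs_R0. auto. Qed.

Theorem mainTheorem12 (n : nat) (N : vec n -> R)
  (H : nat -> (vec n -> vec n) -> Prop) (L : nat -> (vec n -> vec n) -> R) :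
  is_norm N ->
  (forall i, holonomic N (H i) (L i)) ->
  exists (phi : nat -> nat) (rho : vec n -> vec n -> R),
    (forall k, (phi k < phi (S k))%nat) /\
    semi_metric rho /\
    forall B : vec n -> vec n -> Prop,
      (exists r, forall u v, B u v -> N u <= r /\ N v <= r) ->
      forall eps, 0 < eps ->
        exists K, forall k, (K <= k)%nat -> forall u v, B u v ->
          Rabs (hol_metric N (H (phi k)) (L (phi k)) u v - rho u v) < eps.
Proof.
  intros HN Hh.
  set (d := fun i u v => hol_metric N (H i) (L i) u v).
  assert (Hlip : forall i u v u' v', Rabs (d i u v - d i u' v') <= N (vsub u u') + N (vsub v v')).
  { intros i. apply lip_gen; auto; intros; unfold d.
    apply hol_sym; auto. apply hol_tri; auto. apply hol_leN; auto. }
  set (x := fun j i => d i (ed (fst (of_nat j))) (ed (snd (of_nat j)))).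
  destruct (diag x (fun j => N (vsub (ed (fst (of_nat j))) (ed (snd (of_nat j)))))) as [phi [Hphi Hx]].
  { intros j i. unfold x, d. rewrite Rabs_right. apply hol_leN; auto.
    apply Rle_ge, hol_ge0; auto. }
  assert (Hc : forall u v, Cauchy_crit (fun k => d (phi k) u v)).
  { intros u v eps He.
    destruct (ed_denseN N u (eps/5) HN ltac:(lra)) as [a Ha].
    destruct (ed_denseN N v (eps/5) HN ltac:(lra)) as [b Hb].
    destruct (Hx (to_nat (a, b))) as [l Hl].
    destruct (CV_Cauchy _ (exist _ l Hl) (eps/5) ltac:(lra)) as [K HK].
    exists K. intros k m Hk Hm. specialize (HK k m Hk Hm).
    unfold x in HK. rewrite cancel_of_to in HK. cbn [fst snd] in HK. unfold Rdist in *.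
    pose proof (Hlip (phi k) u v (ed a) (ed b)).
    pose proof (Hlip (phi m) u v (ed a) (ed b)).
    rewrite (Nsub_sym N u), (Nsub_sym N v) in H0, H1 by auto.
    apply Rabs_def2 in HK. apply absle in H0. apply absle in H1.
    apply Rabs_def1; lra. }
  set (rho := fun u v => proj1_sig (R_complete _ (Hc u v))).
  assert (Hr : forall u v, Un_cv (fun k => d (phi k) u v) (rho u v)).
  { intros u v. unfold rho. destruct (R_complete _ (Hc u v)); auto. }
  assert (Hsm : semi_metric rho /\ forall u v, rho u v <= N (vsub u v)).
  { split; [split; [|split; [|split]]|].
    - intros u v. apply (@Rle_cv_lim (fun _ => 0) (fun k => d (phi k) u v) 0 (rho u v)); auto.
      intros; apply hol_ge0; auto. apply cv_const.
    - intros u v. apply (UL_sequence (fun k => d (phi k) u v)); auto.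
      assert ((fun k => d (phi k) u v) = (fun k => d (phi k) v u)).
      { apply functional_extensionality; intros; unfold d; apply hol_sym; auto. }
      rewrite H0; auto.
    - intros u. apply (UL_sequence (fun k => d (phi k) u u)); auto.
      assert ((fun k => d (phi k) u u) = (fun _ => 0)).
      { apply functional_extensionality; intros; unfold d; apply hol_self; auto. }
      rewrite H0; apply cv_const.
    - intros u v w. apply (@Rle_cv_lim (fun k => d (phi k) u w)
                         (fun k => d (phi k) u v + d (phi k) v w) (rho u w) (rho u v + rho v w)); auto.
      intros; apply hol_tri; auto. apply CV_plus; auto.
    - intros u v. apply (@Rle_cv_lim (fun k => d (phi k) u v) (fun _ => N (vsub u v)) (rho u v) (N (vsub u v))); auto.
      intros; apply hol_leN; auto. apply cv_const. }
  destruct Hsm as [Hsm HrN].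
  assert (Hrlip : forall u v u' v', Rabs (rho u v - rho u' v') <= N (vsub u u') + N (vsub v v')).
  { destruct Hsm as [_ [Hs [_ Ht]]]. apply lip_gen; auto. }
  exists phi, rho. split; auto. split; auto.
  intros B [r Hr0] eps He.
  apply NNPP. intros Hcon.
  assert (Hg : forall K, exists t : nat * (vec n * vec n), (K <= fst t)%nat /\
            B (fst (snd t)) (snd (snd t)) /\
            eps <= Rabs (d (phi (fst t)) (fst (snd t)) (snd (snd t)) - rho (fst (snd t)) (snd (snd t)))).
  { intros K. apply NNPP. intros HK. apply Hcon. exists K. intros k Hk u v Huv.
    apply Rnot_le_lt. intros Hle. apply HK. exists (k, (u, v)). simpl. auto. }
  destruct (choice _ Hg) as [g Hgs].
  set (uu := fun k => fst (snd (g k))). set (vv := fun k => snd (snd (g k))).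
  destruct (Nlow N HN) as [C2 HC2].
  assert (Hbd : forall k i, Rabs (uu k i) <= Rabs C2 * r /\ Rabs (vv k i) <= Rabs C2 * r).
  { intros k i. destruct (Hgs k) as [_ [HB _]]. destruct (Hr0 _ _ HB) as [R1 R2].
    pose proof (HC2 (uu k) i). pose proof (HC2 (vv k) i).
    pose proof (Nge0 N (uu k) HN). pose proof (Nge0 N (vv k) HN).
    pose proof (Rle_abs C2). pose proof (Rabs_pos C2). unfold uu, vv in *. split; nra. }
  destruct (BWn uu (Rabs C2 * r)) as [p1 [us [Hp1 Hus]]]. intros; apply Hbd.
  destruct (BWn (fun k => vv (p1 k)) (Rabs C2 * r)) as [p2 [vs [Hp2 Hvs]]]. intros; apply Hbd.
  destruct (Nconv N (fun k => uu (p1 (p2 k))) us HN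
             (fun i => cv_sub _ _ _ (Hus i) Hp2) (eps/6) ltac:(lra)) as [K1 HK1].
  destruct (Nconv N (fun k => vv (p1 (p2 k))) vs HN Hvs (eps/6) ltac:(lra)) as [K2 HK2].
  destruct (Hr us vs (eps/3) ltac:(lra)) as [K0 HK0].
  set (K := max K0 (max K1 K2)).
  set (m := p1 (p2 K)).
  assert (Hm : (K <= fst (g m))%nat).
  { destruct (Hgs m) as [Hgm _]. pose proof (sincr_ge _ (sincr_comp _ _ Hp1 Hp2) K).
    unfold m in *. lia. }
  destruct (Hgs m) as [_ [_ Hbad]].
  specialize (HK0 (fst (g m)) ltac:(lia)). unfold Rdist in HK0.
  specialize (HK1 K ltac:(lia)). specialize (HK2 K ltac:(lia)).
  pose proof (Hlip (phi (fst (g m))) (uu m) (vv m) us vs).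
  pose proof (Hrlip (uu m) (vv m) us vs).
  unfold uu, vv in *. fold m in HK1, HK2.
  apply absle in H0. apply absle in H1. apply Rabs_def2 in HK0.
  assert (Rabs (d (phi (fst (g m))) (fst (snd (g m))) (snd (snd (g m))) -
                rho (fst (snd (g m))) (snd (snd (g m)))) < eps).
  { apply Rabs_def1; lra. }
  lra.
Qed.
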